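(* Let $n$ be a positive integer. (a) For every positive integer $c$ with $c\leq \max_{k\in\mathbb{Z}_{>0}}\bigl(2^k n-(k+2^k-2)2^k-1\bigr)$, there is an arithmetical structure $(r_1,\dots,r_n)$ on $K_n$ with $r_1=c$. (b) For every prime number $p$ with $p\leq \max_{k\in\mathbb{Z}_{>0}}\bigl(2^k n-(k+2^k-3)2^k-3\bigr)$, there is an arithmetical structure $(r_1,\dots,r_n)$ on $K_n$ with $r_1=p$.
   Context: An arithmetical structure on the complete graph $K_n$ is an $n$-tuple $(r_1,r_2,\dots,r_n)$ of positive integers with $\gcd(r_1,\dots,r_n)=1$ such that $r_j$ divides $\sum_{i=1}^n r_i$ for every $j$. The entries are always listed so that $r_1\geq r_2\geq\dots\geq r_n$; thus $r_1$ is the largest value of the structure. *)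

(* Defs.v *)
From mathcomp Require Import all_boot all_order all_algebra.
Set Implicit Arguments. Unset Strict Implicit. Unset Printing Implicit Defensive.

Definition arith_struct_Kn (n : nat) (r : seq nat) : Prop :=
  [/\ size r = n,
      all (fun x => 0 < x) r,
      sorted geq r,
      foldr gcdn 0 r = 1
    & all (fun x => x %| sumn r) r].

(* Main.v *)
Require Import Defs.
From mathcomp Require Import all_boot all_order all_algebra zify.
Import GRing.Theory Num.Theory.

Definition Rep (k c N : nat) :=
  exists s : seq nat, [/\ size s = N, all (fun i => i <= k) s,
     sumn (map (expn 2) s) = c & (odd c -> 0 \in s)].

Lemma split_step k s : all (fun i => i <= k) s ->
  size s < sumn (map (expn 2) s) ->
  exists s', [/\ size s' = (size s).+1, all (fun i => i <= k) s',
     sumn (map (expn 2) s') = sumn (map (expn 2) s) & (0 \in s -> 0 \in s')].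
Proof.
elim: s => [|i t IH] //= /andP[Hi Ht] Hlt.
case: i Hi Hlt => [|j] Hj Hlt.
  have [t' [H1 H2 H3 H4]] : exists s', [/\ size s' = (size t).+1, all (fun i => i <= k) s',
     sumn (map (expn 2) s') = sumn (map (expn 2) t) & (0 \in t -> 0 \in s')].
    apply: IH => //; rewrite expn0 in Hlt; lia.
  exists (0 :: t'); split => //=. all: try by rewrite H1. all: try by rewrite H3.
exists (j :: j :: t); split => //=.
- by rewrite Ht (ltnW Hj).
- rewrite expnS; lia.
- by rewrite !in_cons /= => ->; rewrite !orbT.
Qed.

Lemma rep_mono k c N M : Rep k c N -> N <= M <= c -> Rep k c M.
Proof.
move=> HR /andP[H1 H2]; have [d Ed] : exists d, M = N + d by exists (M - N); lia.
subst M; clear H1.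
elim: d H2 => [|d IH] H2; first by rewrite addn0.
have [s [Hs1 Hs2 Hs3 Hs4]] := IH ltac:(lia).
have [s' [H1' H2' H3' H4']] := @split_step k s Hs2 ltac:(lia).
exists s'; split => //; [lia | congruence | by move=> /Hs4 /H4'].
Qed.

Lemma sumn_map_succ s : sumn (map (expn 2) (map succn s)) = (sumn (map (expn 2) s)).*2.
Proof. elim: s => //= i t ->; rewrite expnS doubleD; lia. Qed.

Lemma rep_double k c N (b : bool) : Rep k c N -> Rep k.+1 (b + c.*2) (b + N).
Proof.
move=> [s [H1 H2 H3 H4]].
exists (nseq b 0 ++ map succn s); split.
- by rewrite size_cat size_nseq size_map H1.
- rewrite all_cat all_map; apply/andP; split; first by case: b.
  by apply: sub_all H2 => i /=.
- rewrite map_cat sumn_cat sumn_map_succ H3; case: b => //=.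
- rewrite oddD odd_double addbF; by case: b.
Qed.

Lemma rep_base c : Rep 0 c c.
Proof.
exists (nseq c 0); split.
- by rewrite size_nseq.
- by elim: c.
- elim: c => //= c ->; rewrite expn0; lia.
- by case: c.
Qed.

Fixpoint B (k c : nat) : nat := if k is k'.+1 then odd c + B k' c./2 else c.

Lemma B_le k c : B k c <= c.
Proof.
elim: k c => //= k IH c; have := IH c./2; have := odd_double_half c; lia.
Qed.

Lemma rep_B k c : Rep k c (B k c).
Proof.
elim: k c => [|k IH] c /=; first exact: rep_base.
have := @rep_double k c./2 _ (odd c) (IH c./2); by rewrite odd_double_half.
Qed.

Lemma rep_exists k c N : B k c <= N <= c -> Rep k c N.
Proof. move=> H; apply: rep_mono (rep_B k c) H. Qed.

Lemma B_bound k q r : r < 2 ^ k -> B k (q * 2 ^ k + r) + (r < (2 ^ k).-1) <= q + k.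
Proof.
elim: k q r => [|k IH] q r /=.
  rewrite expn0 => Hr; have -> : r = 0 by lia. by rewrite muln1 addn0.
move=> Hr.
have Er := odd_double_half r.
set h := r./2 in Er *; set b := odd r in Er *.
have Hh : h < 2 ^ k by move: Hr; rewrite expnS; lia.
have Ec : q * 2 ^ k.+1 + r = b + (q * 2 ^ k + h).*2 by rewrite expnS; lia.
rewrite Ec oddD odd_double addbF half_bit_double.
have := IH q h Hh.
have P0 : 0 < 2 ^ k by rewrite expn_gt0.
rewrite expnS.
case: (ltnP h (2^k).-1) => Hh1; case: (ltnP r (2 * 2^k).-1) => Hr1; case: b Er Ec => /= Er Ec; lia.
Qed.

Lemma gcd_mem r x : x \in r -> foldr gcdn 0 r %| x.
Proof.
elim: r => //= y t IH; rewrite in_cons => /orP[/eqP->|/IH H]; first exact: dvdn_gcdl.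
exact: dvdn_trans (dvdn_gcdr _ _) H.
Qed.

Lemma mk n c (t : seq nat) : 0 < c -> size t = n.-1 -> 0 < n ->
  all (fun x => 0 < x <= c) t -> 1 \in t -> all (fun x => x %| c + sumn t) t ->
  c %| sumn t -> exists r, arith_struct_Kn n r /\ head 0 r = c.
Proof.
move=> c0 Ht n0 Hall H1 Hdiv Hc.
exists (c :: sort geq t); split => //.
have Hp := permEl (perm_sort geq t).
split.
- rewrite /= size_sort Ht; lia.
- rewrite /= c0 (perm_all _ Hp); by apply: sub_all Hall => x /andP[].
- rewrite /= path_sortedE; last by move=> a b d /= H H'; exact: leq_trans H' H.
  rewrite sort_sorted ?andbT; last by move=> a b; exact: leq_total.
  rewrite (perm_all _ Hp); by apply: sub_all Hall => x /andP[].
- apply/eqP; rewrite -dvdn1; apply: gcd_mem; by rewrite in_cons (perm_mem Hp) H1 orbT.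
- rewrite /= (perm_sumn Hp) dvdn_addl // (perm_all _ Hp) Hdiv.
  by rewrite dvdnn.
Qed.

Lemma Bfit1 k x T : x + 1 + (k + 2^k) * 2^k <= T * 2^k -> B k x + 1 + 2^k <= T.
Proof.
set P := 2^k => H.
have P0 : 0 < P by rewrite expn_gt0.
have E := divn_eq x P; set q := x %/ P in E *; set r := x %% P in E *.
have Hr : r < P by rewrite ltn_pmod.
have Bq := @B_bound k q r Hr; rewrite -E in Bq.
case: (ltnP r P.-1) => Hr1 /=; rewrite ?Hr1 /= in Bq.
  have : (q + k + P) * P < T * P by nia.
  rewrite ltn_pmul2r //; lia.
have : (q + 1 + k + P) * P <= T * P by nia.
rewrite leq_pmul2r //; lia.
Qed.

Lemma Bfit2 k x T : x + 2 + (k + 2^k) * 2^k <= T * 2^k -> B k x + 2 + 2^k <= T.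
Proof.
set P := 2^k => H.
have P0 : 0 < P by rewrite expn_gt0.
have E := divn_eq x P; set q := x %/ P in E *; set r := x %% P in E *.
have Hr : r < P by rewrite ltn_pmod.
have Bq := @B_bound k q r Hr; rewrite -E in Bq.
case: (ltnP r P.-1) => Hr1 /=; rewrite ?Hr1 /= in Bq.
  have : (q + k + P) * P < T * P by nia.
  rewrite ltn_pmul2r //; lia.
have : (q + 1 + k + P) * P < T * P by nia.
rewrite ltn_pmul2r //; lia.
Qed.

Definition Rep1 (k c N : nat) :=
  exists s : seq nat, [/\ size s = N, all (fun i => i <= k) s,
     sumn (map (expn 2) s) = c & 0 \in s].

Lemma rep1_odd k c N : odd c -> B k c <= N <= c -> Rep1 k c N.
Proof.
move=> Ho H; have [s [H1 H2 H3 H4]] := @rep_exists k c N H.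
by exists s; split => //; apply: H4.
Qed.

Lemma rep1_even k c N : odd c = false -> 0 < c -> B k c.-1 <= N.-1 -> N <= c -> 0 < N ->
  Rep1 k c N.
Proof.
move=> He c0 HB HN N0.
have Ho : odd c.-1 by move: He c0; clear; case: c => //= c; case: (odd c).
have [|s [H1 H2 H3 H4]] := @rep_exists k c.-1 N.-1; first by rewrite HB /=; lia.
exists (0 :: s); split => //=; [by rewrite H1; lia | by rewrite H3 expn0; lia].
Qed.

Lemma small n c : 0 < c -> c < n -> exists r, arith_struct_Kn n r /\ head 0 r = c.
Proof.
move=> c0 cn.
apply: (@mk n c (nseq (n - c - 1) c ++ nseq c 1)) => //.
- rewrite size_cat !size_nseq; lia.
- lia.
- rewrite all_cat; apply/andP; split; apply/allP => x /nseqP [-> _]; lia.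
- rewrite mem_cat; apply/orP; right; apply/nseqP; split => //.
- rewrite sumn_cat !sumn_nseq; apply/allP => x; rewrite mem_cat => /orP [] /nseqP [-> _] //.
  apply/dvdn_add; [exact: dvdnn | apply: dvdn_add; [exact: dvdn_mulr | by rewrite mul1n]].
- rewrite sumn_cat !sumn_nseq mul1n; apply: dvdn_add; [exact: dvdn_mulr | exact: dvdnn].
Qed.

Lemma big k n c : 0 < k -> 2^k <= c -> 2^k <= n.+1 -> Rep1 k c (n.+1 - 2^k) ->
  exists r, arith_struct_Kn n r /\ head 0 r = c.
Proof.
set P := 2^k => k0 Pc Pn [s [H1 H2 H3 H4]].
have P2 : 2 <= P by rewrite /P -{1}(expn1 2) leq_exp2l.
have DP : forall i, i <= k -> 2 ^ i %| P by move=> i Hi; rewrite /P dvdn_exp2l.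
have LP : forall i, i <= k -> 2 ^ i <= P by move=> i Hi; rewrite /P leq_exp2l.
have Hsum : c + sumn (nseq (P - 2) c ++ map (expn 2) s) = c * P.
  rewrite sumn_cat sumn_nseq H3; nia.
apply: (@mk n c (nseq (P - 2) c ++ map (expn 2) s)).
- lia.
- rewrite size_cat size_nseq size_map H1; lia.
- lia.
- rewrite all_cat; apply/andP; split; apply/allP => x.
    move=> /nseqP [-> _]; lia.
  move=> /mapP [i Hi ->]; rewrite expn_gt0 /=; apply: leq_trans (LP _ _) Pc.
  exact: (allP H2).
- rewrite mem_cat; apply/orP; right; apply/mapP; by exists 0.
- rewrite Hsum; apply/allP => x; rewrite mem_cat => /orP [].
    by move=> /nseqP [-> _]; exact: dvdn_mulr.
  move=> /mapP [i Hi ->]; apply: dvdn_mull; apply: DP; exact: (allP H2).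
- rewrite sumn_cat sumn_nseq H3; apply: dvdn_add; [exact: dvdn_mulr | exact: dvdnn].
Qed.

Local Open Scope ring_scope.

Theorem theorem2p1 (n : nat) (hn : (0 < n)%N) :
  (forall c : nat, (0 < c)%N ->
     (exists k : nat, (0 < k)%N /\
        (c%:Z <= (2 ^ k * n)%:Z - ((k + 2 ^ k)%:Z - 2) * (2 ^ k)%:Z - 1)) ->
     exists r : seq nat, arith_struct_Kn n r /\ head 0%N r = c)
  /\
  (forall p : nat, prime p ->
     (exists k : nat, (0 < k)%N /\
        (p%:Z <= (2 ^ k * n)%:Z - ((k + 2 ^ k)%:Z - 3) * (2 ^ k)%:Z - 3)) ->
     exists r : seq nat, arith_struct_Kn n r /\ head 0%N r = p).
Proof.
split.
- move=> c c0 [k [k0 Hk]].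
  have P0 : (0 < 2 ^ k)%N by rewrite expn_gt0.
  move: Hk; set P := (2 ^ k)%N => Hk.
  have H : (c + (k + P) * P + 1 <= (n + 2) * P)%N by nia.
  case: (ltnP c n) => cn; first exact: small.
  have HT : (k + P < n + 2)%N.
    have : ((k + P) * P < (n + 2) * P)%N by nia.
    by rewrite ltn_pmul2r.
  have Pc : (P <= c)%N by lia.
  apply: (@big k n _ k0); rewrite -/P; [lia | lia | ].
  case Ho: (odd c).
    apply: rep1_odd => //; apply/andP; split; last lia.
    have := @Bfit1 k c (n + 2); rewrite -/P => /(_ ltac:(lia)); lia.
  apply: rep1_even => //; try lia.
  have := @Bfit2 k c.-1 (n + 2); rewrite -/P => /(_ ltac:(lia)); lia.
- move=> p pp [k [k0 Hk]].
  have p2 := prime_gt1 pp.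
  have P0 : (0 < 2 ^ k)%N by rewrite expn_gt0.
  have Pk : (k < 2 ^ k)%N by apply: ltn_expl.
  have P1 : (k = 1 -> 2 ^ k = 2)%N by move->.
  move: Hk Pk P1; set P := (2 ^ k)%N => Hk Pk P1.
  have H : (p + (k + P) * P + 3 <= (n + 3) * P)%N by nia.
  case: (ltnP p n) => pn; first by apply: small; lia.
  have HT : (k + P < n + 3)%N.
    have : ((k + P) * P < (n + 3) * P)%N by nia.
    by rewrite ltn_pmul2r.
  case Ho: (odd p); last first.
    have p2' : (p = 2)%N.
      by apply/eqP; rewrite eq_sym -dvdn_prime2 // dvdn2 Ho.
    exfalso; rewrite p2' in H.
    have k1 : (k = 1)%N by lia.
    move: H; rewrite (P1 k1) k1; lia.
  have Pp : (P <= p)%N.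
    case: (k =P 1%N) => [/P1 -> //|kn1]; lia.
  apply: (@big k n _ k0); rewrite -/P; [lia | lia | ].
  apply: rep1_odd => //; apply/andP; split; last lia.
  have := @Bfit2 k p (n + 3); rewrite -/P => /(_ ltac:(lia)); lia.
Qed.
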